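(* Let $G$ be a group with a limiting sequence pair $(F_n)_n$, $(k_n)_n$, and let $(g_n)_{n\in\mathbb{N}}$ be any sequence of elements of $G$. Then there exists a sequence $(m_n)_{n\in\mathbb{N}}$ of natural numbers such that for every $l\in\mathbb{N}$ and every $x\in G$, $$g_1\big(g_2(\cdots g_{l-1}(g_lx^{m_l})^{m_{l-1}}\cdots)^{m_2}\big)^{m_1}\in F_l$$ implies $x=1_G$.
   Context: $\mathbb{N}=\{1,2,3,\dots\}$. For a subset $S$ of a group $G$ and $j\in\mathbb{N}$, let $\sqrt[j]{S}=\{g\in G\mid g^j\in S\}$. A limiting sequence pair for $G$ is a pair consisting of subsets $F_1\subseteq F_2\subseteq\cdots$ of $G$ and natural numbers $k_1,k_2,\dots$ such that for every $n\in\mathbb{N}$: (1) for every $g\in G$ there is $m\in\mathbb{N}$ with $gF_n\subseteq F_m$; (2) $\sqrt[k_n]{F_n}=\{1_G\}$; (3) $\sqrt[k_m]{F_n}\subseteq F_n$ for all $m\le n$. *)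

(* Defs.v *)
From Stdlib Require Import Arith.

Definition is_group {G : Type} (mul : G -> G -> G) (one : G) (inv : G -> G) : Prop :=
  (forall x y z, mul x (mul y z) = mul (mul x y) z) /\
  (forall x, mul one x = x) /\ (forall x, mul x one = x) /\
  (forall x, mul (inv x) x = one) /\ (forall x, mul x (inv x) = one).

Fixpoint gpow {G : Type} (mul : G -> G -> G) (one : G) (x : G) (j : nat) : G :=
  match j with
  | 0 => one
  | S j' => mul x (gpow mul one x j')
  end.

Definition groot {G : Type} (mul : G -> G -> G) (one : G) (j : nat) (S : G -> Prop) : G -> Prop :=
  fun g => S (gpow mul one g j).

(* Limiting sequence pair; sequences are indexed by nat, only indices n >= 1
   are meaningful (N = {1,2,...}); values at index 0 are ignored. *)
Definition limiting_sequence_pair {G : Type} (mul : G -> G -> G) (one : G)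
  (F : nat -> G -> Prop) (k : nat -> nat) : Prop :=
  (forall n, 1 <= n -> forall y, F n y -> F (S n) y) /\
  (forall n, 1 <= n -> 1 <= k n) /\
  (forall n, 1 <= n -> forall g, exists m, 1 <= m /\
       forall y, F n y -> F m (mul g y)) /\                      (* (1) g F_n ⊆ F_m *)
  (forall n, 1 <= n -> forall g, groot mul one (k n) (F n) g <-> g = one) /\ (* (2) *)
  (forall m n, 1 <= m -> m <= n -> forall g,
       groot mul one (k m) (F n) g -> F n g).                    (* (3) *)

(* nest g m l x = g_1 (g_2 ( ... g_{l-1} (g_l x^{m_l})^{m_{l-1}} ... )^{m_2})^{m_1} *)
Fixpoint nest {G : Type} (mul : G -> G -> G) (one : G) (g : nat -> G) (m : nat -> nat)
  (l : nat) (y : G) : G :=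
  match l with
  | 0 => y
  | S l' => nest mul one g m l' (mul (g (S l')) (gpow mul one y (m (S l'))))
  end.

(* Main.v *)
Require Import Defs.
From Stdlib Require Import Arith Lia ClassicalEpsilon.

Fixpoint fm (fi : nat -> nat) (a : nat) : nat :=
  match a with 0 => fi 0 | S a' => Nat.max (fm fi a') (Nat.max (S a') (fi (S a'))) end.

Fixpoint chainA (e : nat -> nat -> nat) (a i : nat) : nat :=
  match i with 0 => a | S i' => fm (e (S i')) (chainA e a i') end.

Fixpoint Pk (k : nat -> nat) (j : nat) : nat :=
  match j with 0 => 1 | S j' => Pk k j' * k (S j') end.

Lemma fm_ge fi a : a <= fm fi a /\ fi a <= fm fi a.
Proof. destruct a; cbn [fm]; lia. Qed.

Lemma fm_mono fi a b : a <= b -> fm fi a <= fm fi b.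
Proof. induction 1; cbn [fm]; [lia|]. eapply Nat.le_trans; [eauto|apply Nat.le_max_l]. Qed.

Lemma chainA_mono e i : forall a b, a <= b -> chainA e a i <= chainA e b i.
Proof. induction i; intros; simpl; [lia|]. apply fm_mono; auto. Qed.

Lemma chainA_ge e i : forall a, a <= chainA e a i.
Proof. induction i; intros; simpl; [lia|]. pose proof (fm_ge (e (S i)) (chainA e a i)). specialize (IHi a). lia. Qed.

Lemma Pk_pos k j : (forall n, 1 <= n -> 1 <= k n) -> 1 <= Pk k j.
Proof. intros H; induction j; simpl; [lia|]. specialize (H (S j)). nia. Qed.

Lemma gpow_add {G} (mul : G -> G -> G) one inv (HG : is_group mul one inv) y a b :
  gpow mul one y (a + b) = mul (gpow mul one y a) (gpow mul one y b).
Proof.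
  destruct HG as (As & L1 & R1 & _).
  induction a; simpl. now rewrite L1. now rewrite IHa, As.
Qed.

Lemma gpow_mul {G} (mul : G -> G -> G) one inv (HG : is_group mul one inv) y a b :
  gpow mul one (gpow mul one y b) a = gpow mul one y (a * b).
Proof.
  induction a; simpl; auto. rewrite IHa. symmetry. apply (gpow_add mul one inv HG).
Qed.

Theorem lemma2p2 (G : Type) (mul : G -> G -> G) (one : G) (inv : G -> G)
  (HG : is_group mul one inv)
  (F : nat -> G -> Prop) (k : nat -> nat)
  (HF : limiting_sequence_pair mul one F k)
  (g : nat -> G) :
  exists m : nat -> nat, (forall n, 1 <= n -> 1 <= m n) /\
    forall (l : nat) (x : G), 1 <= l ->
      F l (nest mul one g m l x) -> x = one.
Proof.
  destruct HF as (Hinc & Hk & H1 & H2 & H3).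
  assert (Fmono : forall n y, 1 <= n -> F n y -> forall n', n <= n' -> F n' y).
  { intros n y Hn Hy n' Hle. induction Hle; auto. apply Hinc; auto; lia. }
  pose (e := fun i a => epsilon (inhabits 0)
        (fun m => 1 <= m /\ forall y, F a y -> F m (mul (inv (g i)) y))).
  assert (He : forall i a, 1 <= a -> 1 <= e i a /\ forall y, F a y -> F (e i a) (mul (inv (g i)) y)).
  { intros i a Ha. unfold e. apply epsilon_spec. apply H1; auto. }
  assert (Hstep : forall i a w, 1 <= a -> F a (mul (g i) w) -> F (fm (e i) a) w).
  { intros i a w Ha Hw. destruct (He i a Ha) as [Hp Hi].
    apply Hi in Hw. pose proof HG as (As & L1 & _ & Li & _).
    rewrite As, Li, L1 in Hw.
    eapply Fmono; eauto. apply fm_ge. }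
  pose (m := fun i => Pk k (chainA e i i)).
  assert (Peel : forall c j y, 1 <= c -> j <= c -> F c (gpow mul one y (Pk k j)) -> F c y).
  { intros c j. induction j; intros y Hc Hj Hy; simpl in *.
    - rewrite (proj1 (proj2 (proj2 HG))) in Hy. exact Hy.
    - rewrite <- (gpow_mul mul one inv HG) in Hy. apply IHj in Hy; try lia.
      apply (H3 (S j) c); auto; lia. }
  exists m. split.
  { intros n _. apply Pk_pos; auto. }
  assert (L : forall i a y, 1 <= a -> i <= a -> F a (nest mul one g m i y) -> F (chainA e a i) y).
  { induction i; intros a y Ha Hia Hy; simpl in *; auto.
    apply IHi in Hy; try lia.
    apply Hstep in Hy; [| pose proof (chainA_ge e i a); lia].
    apply Peel with (j := chainA e (S i) (S i)).
    - pose proof (chainA_ge e (S i) a). simpl in H. lia.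
    - apply (chainA_mono e (S i)). lia.
    - exact Hy. }
  intros l x Hl Hx. destruct l as [|l]; [lia|].
  simpl in Hx. apply L in Hx; try lia.
  apply Hstep in Hx; [| pose proof (chainA_ge e l (S l)); lia].
  change (fm (e (S l)) (chainA e (S l) l)) with (chainA e (S l) (S l)) in Hx.
  unfold m in Hx. set (B := chainA e (S l) (S l)) in *.
  assert (HB : 1 <= B) by (pose proof (chainA_ge e (S l) (S l)); unfold B; lia).
  destruct B as [|B]; [lia|]. simpl in Hx.
  rewrite <- (gpow_mul mul one inv HG) in Hx.
  apply Peel in Hx; try lia.
  apply (H2 (S B)); [lia|]. exact Hx.
Qed.
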